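(* Let $\mathbb F\in\{\mathbb C,\mathbb R\}$, $n>1$, and $\gamma=(\gamma_1,\dots,\gamma_n)\in\mathbb F^n$ such that $\operatorname{diag}(\gamma_1,\dots,\gamma_n)$ is not proportional to the identity matrix. Let $\mathfrak t_\gamma(n)$ and ${\rm T}_\gamma(n)$ be as in the context. For $B=(b_{ij})\in{\rm T}_\gamma(n)$ with inverse $B^{-1}=(\widehat b_{ij})$, the coadjoint action ${\rm Ad}^*_B$ maps the point of $\mathfrak t_\gamma^*(n)$ with coordinates $(x_{ij})_{j<i}$, $x_0$ to the point with coordinates $(\mathcal I_{ij})_{j<i}$, $\mathcal I_0$, where \[ \mathcal I_{ij}=\sum_{i\leqslant i',\,j'\leqslant j}b_{ii'}\widehat b_{j'j}x_{i'j'}, \quad j<i, \qquad \mathcal I_0=x_0+\sum_{j<i}\,\sum_{j\leqslant l\leqslant i}\gamma_lb_{li}\widehat b_{jl}x_{ij} \] (equivalently, the strictly lower triangular part of $\mathcal I$ is $BXB^{-1}$). Consequently these expressions, as functions of $B\in{\rm T}_\gamma(n)$ and of the coordinates $x$, form a complete set of functionally independent lifted invariants of ${\rm Ad}^*_{{\rm T}_\gamma(n)}$.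
   Context: $\mathfrak t_\gamma(n)$ is the Lie algebra over $\mathbb F$ with basis $e_{ij}$ ($1\leqslant i<j\leqslant n$) and $f$, with brackets $[e_{ij},e_{i'j'}]=\delta_{i'j}e_{ij'}-\delta_{ij'}e_{i'j}$ and $[f,e_{ij}]=(\gamma_i-\gamma_j)e_{ij}$; it is realized by matrices via $e_{ij}\sim E^n_{ij}$ (matrix unit) and $f\sim\operatorname{diag}(\gamma_1,\dots,\gamma_n)$. It is the Lie algebra of the group ${\rm T}_\gamma(n)=\{B\text{ nonsingular upper triangular } n\times n \mid \exists\,\varepsilon\in\mathbb F:\ b_{ii}=e^{\gamma_i\varepsilon}\ \forall i\}$, acting by the adjoint action ${\rm Ad}_BY=BYB^{-1}$. For $i<j$, $x_{ji}$ denotes the coordinate function on the dual space $\mathfrak t_\gamma^*(n)$ dual to $e_{ij}$ (i.e. with respect to the dual basis $e^*_{ji}$, $\langle e^*_{j'i'},e_{ij}\rangle=\delta_{ii'}\delta_{jj'}$), and $x_0$ the coordinate dual to $f$; $X$ is the strictly lower triangular $n\times n$ matrix with entries $x_{ij}$ for $i>j$ and zeros elsewhere. The coadjoint action is $({\rm Ad}^*_B\xi)(y)=\xi({\rm Ad}_{B^{-1}}y)$. A lifted invariant (in the sense of the moving-frame method of Fels and Olver) is a component of the map $(B,\xi)\mapsto{\rm Ad}^*_B\xi$ written in coordinates. *)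

(* Defs.v *)
From HB Require Import structures.
From mathcomp Require Import all_boot all_order all_algebra.
From mathcomp Require Import all_classical all_reals all_analysis.
From mathcomp Require Import complex.
Set Implicit Arguments. Unset Strict Implicit. Unset Printing Implicit Defensive.
Import Order.TTheory GRing.Theory Num.Theory.
Local Open Scope ring_scope.

Definition cexp (R : realType) (z : R[i]) : R[i] :=
  Complex (expR (complex.Re z) * cos (complex.Im z)) (expR (complex.Re z) * sin (complex.Im z)).

(* An element y = c f + sum_{i<j} a_ij e_ij of t_gamma(n) is given by its
   coordinates (c, A); only the strictly upper part of A is used.
   Its matrix realization: f ~ diag(gamma), e_ij ~ E_ij. *)
Definition realize (F : fieldType) (n : nat) (g : 'rV[F]_n)
  (c : F) (A : 'M[F]_n) : 'M[F]_n :=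
  c *: diag_mx g + \matrix_(i, j) (if (i < j)%N then A i j else 0).

(* The element xi of t_gamma^*(n) with coordinates x0 (dual to f) and
   x_{ji} (j > i, dual to e_ij, stored as the strictly lower triangular
   matrix X) evaluated at y = (c, A). *)
Definition pair (F : fieldType) (n : nat) (x0 : F) (X : 'M[F]_n)
  (c : F) (A : 'M[F]_n) : F :=
  c * x0 + \sum_(i < n) \sum_(j < n | (i < j)%N) A i j * X j i.

Definition strictly_lower (F : fieldType) (n : nat) (X : 'M[F]_n) : Prop :=
  forall i j : 'I_n, (i <= j)%N -> X i j = 0.

Definition in_Tgamma (F : fieldType) (expF : F -> F) (n : nat)
  (g : 'rV[F]_n) (B : 'M[F]_n) : Prop :=
  B \in unitmx /\ (forall i j : 'I_n, (j < i)%N -> B i j = 0) /\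
  exists eps : F, forall i : 'I_n, B i i = expF (g 0 i * eps).

Definition Iij (F : fieldType) (n : nat) (B X : 'M[F]_n) (i j : 'I_n) : F :=
  \sum_(i' < n | (i <= i')%N) \sum_(j' < n | (j' <= j)%N)
     B i i' * invmx B j' j * X i' j'.

Definition I0 (F : fieldType) (n : nat) (g : 'rV[F]_n) (B X : 'M[F]_n)
  (x0 : F) : F :=
  x0 + \sum_(i < n) \sum_(j < n | (j < i)%N)
         \sum_(l < n | (j <= l <= i)%N) g 0 l * B l i * invmx B j l * X i j.

Definition Imat (F : fieldType) (n : nat) (B X : 'M[F]_n) : 'M[F]_n :=
  \matrix_(i, j) (if (j < i)%N then Iij B X i j else 0).

Definition lemma1_stmt (F : fieldType) (expF : F -> F) : Prop :=
  forall (n : nat) (g : 'rV[F]_n),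
  (1 < n)%N ->
  (exists i j : 'I_n, g 0 i != g 0 j) ->
  forall B : 'M[F]_n, in_Tgamma expF g B ->
  [/\
    (* Ad_{B^{-1}} maps t_gamma(n) into itself *)
    (forall (c : F) (A : 'M[F]_n), exists (c' : F) (A' : 'M[F]_n),
        realize g c' A' = invmx B *m realize g c A *m B),
    (* coadjoint action: (Ad^*_B xi)(y) = xi(Ad_{B^{-1}} y) for all y, and
       Ad^*_B xi is the point with coordinates I_0, (I_{ij})_{j<i} *)
    (forall (x0 : F) (X : 'M[F]_n), strictly_lower X ->
      forall (c : F) (A : 'M[F]_n) (c' : F) (A' : 'M[F]_n),
        realize g c' A' = invmx B *m realize g c A *m B ->
        pair x0 X c' A' = pair (I0 g B X x0) (Imat B X) c A),
    (forall X : 'M[F]_n, strictly_lower X ->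
      forall i j : 'I_n, (j < i)%N -> Iij B X i j = (B *m X *m invmx B) i j) &
    (* functional independence: for fixed B, x |-> (I_0, I) is injective *)
    (forall (x0 x0' : F) (X X' : 'M[F]_n), strictly_lower X -> strictly_lower X' ->
      I0 g B X x0 = I0 g B X' x0' -> Imat B X = Imat B X' ->
      x0 = x0' /\ X = X')].

(* Main.v *)
Require Import Defs.
From HB Require Import structures.
From mathcomp Require Import all_boot all_order all_algebra.
From mathcomp Require Import all_classical all_reals all_analysis.
From mathcomp Require Import complex.
From mathcomp Require Import ring.
Set Implicit Arguments. Unset Strict Implicit. Unset Printing Implicit Defensive.
Import Order.TTheory GRing.Theory Num.Theory.
Local Open Scope ring_scope.

Definition lem1_upper (F : fieldType) n (M : 'M[F]_n) :=
  forall i j : 'I_n, (j < i)%N -> M i j = 0.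

Lemma ord_neqL n (i j : 'I_n) : (j < i)%N -> (i == j) = false.
Proof. by move=> h; apply/eqP => e; rewrite e ltnn in h. Qed.
Lemma ord_neqR n (i j : 'I_n) : (j < i)%N -> (j == i) = false.
Proof. by move=> h; apply/eqP => e; rewrite e ltnn in h. Qed.

Lemma lem1_sum_cond (F : fieldType) (I : finType) (P : pred I) (f : I -> F) :
  (forall i, ~~ P i -> f i = 0) -> \sum_(i | P i) f i = \sum_i f i.
Proof.
move=> H; rewrite big_mkcond; apply: eq_bigr => i _.
by case: ifP => // /negbT /H ->.
Qed.

Lemma inv_upper (F : fieldType) n (B : 'M[F]_n) : B \in unitmx -> lem1_upper B ->
  lem1_upper (invmx B) /\ (forall i, invmx B i i * B i i = 1).
Proof.
move=> Bu Bup.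
have dB : forall i, B i i != 0.
  move=> i; apply/negP => /eqP Bi0.
  move: Bu; rewrite unitmxE -det_tr det_trig; last first.
    by apply/is_trig_mxP => a b ab; rewrite mxE Bup.
  rewrite (bigD1 i) //= mxE Bi0 mul0r unitfE eqxx //.
set C := invmx B.
have e : forall i j, \sum_k C i k * B k j = (i == j)%:R.
  move=> i j; have := congr1 (fun M : 'M[F]_n => M i j) (mulVmx Bu).
  by rewrite !mxE.
have Cup : lem1_upper C.
  move=> i j; move: {2}(nat_of_ord j) (erefl (nat_of_ord j)) => m.
  elim/ltn_ind: m i j => m IH i j jm ji.
  have := e i j; have ij0 : (i == j) = false by apply/eqP => h; rewrite h ltnn in ji.
  rewrite ij0 (bigD1 j) //= big1.
    by rewrite addr0 => /eqP; rewrite mulf_eq0 (negbTE (dB j)) orbF => /eqP.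
  move=> k kj; case: (ltngtP k j) => kj'.
  - by rewrite (IH k) ?mul0r // -?jm // (ltn_trans kj').
  - by rewrite Bup ?mulr0.
  - by move: kj; rewrite (val_inj kj') eqxx.
split=> // i; have := e i i; rewrite eqxx (bigD1 i) //= big1 ?addr0 //.
move=> k ki; case: (ltngtP k i) => ki'.
- by rewrite Cup ?mul0r.
- by rewrite Bup ?mulr0.
- by move: ki; rewrite (val_inj ki') eqxx.
Qed.

Lemma mul_upper (F : fieldType) n (P Q : 'M[F]_n) : lem1_upper P -> lem1_upper Q ->
  lem1_upper (P *m Q) /\ (forall i, (P *m Q) i i = P i i * Q i i).
Proof.
move=> Pu Qu; split.
  move=> i j ji; rewrite mxE big1 // => k _.
  case: (ltnP k i) => ki; first by rewrite Pu ?mul0r.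
  by rewrite Qu ?mulr0 // (leq_trans ji).
move=> i; rewrite mxE (bigD1 i) //= big1 ?addr0 // => k ki.
case: (ltngtP k i) => ki'.
- by rewrite Pu ?mul0r.
- by rewrite Qu ?mulr0.
- by move: ki; rewrite (val_inj ki') eqxx.
Qed.

Lemma realizeE (F : fieldType) n (g : 'rV[F]_n) c A i j :
  realize g c A i j = (if i == j then c * g 0 i else 0) + (if (i < j)%N then A i j else 0).
Proof.
rewrite !mxE; case: eqP => [->|_]; by rewrite ?mulr1n ?mulr0n ?mulr0.
Qed.

Lemma realize_up (F : fieldType) n (g : 'rV[F]_n) c A :
  lem1_upper (realize g c A) /\ (forall i, realize g c A i i = c * g 0 i).
Proof.
split=> [i j ji|i]; rewrite realizeE.
  by rewrite (ord_neqL ji) ltnNge (ltnW ji) addr0.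
by rewrite eqxx ltnn addr0.
Qed.

Lemma realize_id (F : fieldType) n (g : 'rV[F]_n) c (M : 'M[F]_n) :
  lem1_upper M -> (forall i, M i i = c * g 0 i) -> realize g c M = M.
Proof.
move=> Mu Md; apply/matrixP => i j; rewrite realizeE.
case: (ltngtP i j) => ij.
- by rewrite (ord_neqR ij) add0r.
- by rewrite (ord_neqL ij) addr0 Mu.
- move: (val_inj ij) => {}ij; subst j; by rewrite eqxx ?ltnn addr0 Md.
Qed.

Lemma Iij_eq (F : fieldType) n (B X : 'M[F]_n) i j :
  lem1_upper B -> lem1_upper (invmx B) -> Iij B X i j = (B *m X *m invmx B) i j.
Proof.
move=> Bu Cu; rewrite /Iij.
rewrite lem1_sum_cond; last first.
  move=> a; rewrite -ltnNge => ai; rewrite big1 // => b _; by rewrite Bu ?mul0r.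
transitivity (\sum_a \sum_b B i a * invmx B b j * X a b).
  apply: eq_bigr => a _; apply: lem1_sum_cond => b; rewrite -ltnNge => jb.
  by rewrite Cu ?mulr0 ?mul0r.
rewrite mxE.
under [RHS]eq_bigr do rewrite mxE big_distrl /=.
rewrite exchange_big /=; apply: eq_bigr => a _; apply: eq_bigr => b _.
by rewrite mulrAC.
Qed.

Lemma pairI_eq (F : fieldType) n (g : 'rV[F]_n) (B : 'M[F]_n) (i0 j0 : 'I_n) :
  g 0 i0 != g 0 j0 -> B \in unitmx -> lem1_upper B ->
  forall (x0 : F) (X : 'M[F]_n), strictly_lower X ->
      forall (c : F) (A : 'M[F]_n) (c' : F) (A' : 'M[F]_n),
        realize g c' A' = invmx B *m realize g c A *m B ->
        pair x0 X c' A' = pair (I0 g B X x0) (Imat B X) c A.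
Proof.
move=> hg Bu Bup x0 X Xl c A c' A' H.
have [Cu Cd] := inv_upper Bu Bup.
have [Yu Yd] := realize_up g c A.
have [CYu CYd] := mul_upper Cu Yu.
have [Mu Md] := mul_upper CYu Bup.
have cc : c' = c.
  have h : forall k, c' * g 0 k = c * g 0 k.
    move=> k; have := congr1 (fun M : 'M[F]_n => M k k) H.
    rewrite /= (proj2 (realize_up g c' A')) Md CYd Yd => ->.
    by rewrite mulrAC Cd mul1r.
  apply/eqP; rewrite -subr_eq0; apply/negPn/negP => hne.
  have z : forall k, g 0 k = 0.
    move=> k; apply/eqP; move: (h k) => /eqP; rewrite -subr_eq0 -mulrBl mulf_eq0.
    by rewrite (negbTE hne).
  by move: hg; rewrite !z eqxx.
subst c'.
have hA : forall a b : 'I_n, (a < b)%N -> A' a b = (invmx B *m realize g c A *m B) a b.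
  by move=> a b ab; rewrite -H realizeE (ord_neqR ab) ab add0r.
rewrite /pair.
transitivity (c * x0 + \tr (invmx B *m realize g c A *m B *m X)).
  congr (_ + _); rewrite /mxtrace; apply: eq_bigr => a _.
  rewrite mxE -(@lem1_sum_cond _ _ (fun b : 'I_n => (a < b)%N)).
    by apply: eq_bigr => b ab; rewrite hA.
  by move=> b; rewrite -leqNgt => ba; rewrite Xl ?mulr0.
have -> : \tr (invmx B *m realize g c A *m B *m X) =
          \tr (realize g c A *m (B *m X *m invmx B)).
  by rewrite -!mulmxA mxtrace_mulC -!mulmxA.
rewrite /mxtrace /I0 mulrDr -addrA; congr (_ + _).
have e : forall k, (realize g c A *m (B *m X *m invmx B)) k k =
   c * g 0 k * (B *m X *m invmx B) k k +
   \sum_(l < n | (k < l)%N) A k l * (B *m X *m invmx B) l k.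
  move=> k; rewrite mxE.
  under eq_bigr do rewrite realizeE mulrDl.
  rewrite big_split /=; congr (_ + _).
    rewrite (bigD1 k) //= eqxx big1 ?addr0 // => l lk.
    by rewrite eq_sym (negbTE lk) mul0r.
  by rewrite [RHS]big_mkcond; apply: eq_bigr => l _; case: ifP => _ //; rewrite mul0r.
under eq_bigr do rewrite e.
rewrite big_split /=; congr (_ + _); last first.
  apply: eq_bigr => a _; apply: eq_bigr => b ab.
  by rewrite /Imat mxE ab Iij_eq.
transitivity (c * \sum_(l < n) g 0 l * (B *m X *m invmx B) l l).
  by rewrite mulr_sumr; apply: eq_bigr => l _; rewrite mulrA.
congr (_ * _).
transitivity (\sum_(l < n) \sum_(j < n) \sum_(i < n) g 0 l * B l i * invmx B j l * X i j).
  apply: eq_bigr => l _; rewrite mxE big_distrr; apply: eq_bigr => j _.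
  rewrite mxE big_distrl big_distrr; apply: eq_bigr => i _ /=; ring.
symmetry.
transitivity (\sum_(i < n) \sum_(j < n) \sum_(l < n) g 0 l * B l i * invmx B j l * X i j).
  apply: eq_bigr => i _.
  rewrite lem1_sum_cond; last first.
    move=> j; rewrite -leqNgt => ij; rewrite big1 // => l _.
    by rewrite Xl ?mulr0.
  apply: eq_bigr => j _; apply: lem1_sum_cond => l.
  rewrite negb_and -!ltnNge; case/orP => h.
    by rewrite Cu ?mulr0 ?mul0r.
  by rewrite Bup ?mulr0 ?mul0r.
rewrite exchange_big; under eq_bigr do rewrite exchange_big.
by rewrite exchange_big.
Qed.

Lemma pair_one (F : fieldType) n (x : F) (X : 'M[F]_n) : pair x X 1 0 = x.
Proof.
rewrite /pair mul1r big1 ?addr0 // => a _; rewrite big1 // => b _.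
by rewrite mxE mul0r.
Qed.

Lemma pair_delta (F : fieldType) n (x : F) (X : 'M[F]_n) (p q : 'I_n) :
  (q < p)%N -> pair x X 0 (delta_mx q p) = X p q.
Proof.
move=> qp; rewrite /pair mul0r add0r (bigD1 q) //= (bigD1 p) //= mxE !eqxx mul1r.
rewrite big1 ?addr0.
  rewrite big1 ?addr0 // => a aq; rewrite big1 // => b _.
  by rewrite mxE (negbTE aq) mul0r.
by move=> b /andP[_ bp]; rewrite mxE eqxx (negbTE bp) mul0r.
Qed.

Lemma lem1_main (F : fieldType) (expF : F -> F) : lemma1_stmt expF.
Proof.
move=> n g n1 [i0 [j0 hg]] B [Bu [Bup _]].
have Bu' : lem1_upper B by move=> i j; apply: Bup.
have [Cu Cd] := inv_upper Bu Bu'.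
have conjB : forall c A, realize g c (B *m realize g c A *m invmx B)
                         = B *m realize g c A *m invmx B.
  move=> c A; have [Yu Yd] := realize_up g c A.
  have [P1u P1d] := mul_upper Bu' Yu; have [P2u P2d] := mul_upper P1u Cu.
  apply: realize_id => // i; rewrite P2d P1d Yd.
  by rewrite mulrAC [B i i * _]mulrC Cd mul1r.
split.
- move=> c A; exists c, (invmx B *m realize g c A *m B).
  have [Yu Yd] := realize_up g c A.
  have [P1u P1d] := mul_upper Cu Yu; have [P2u P2d] := mul_upper P1u Bu'.
  apply: realize_id => // i; rewrite P2d P1d Yd.
  by rewrite mulrAC Cd mul1r.
- exact: pairI_eq hg Bu Bu'.
- by move=> X _ i j _; exact: Iij_eq.
- move=> x0 x0' X X' Xl Xl' e0 eM.
  have key : forall c A, pair x0 X c A = pair x0' X' c A.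
    move=> c A.
    have H : forall x Y, strictly_lower Y -> pair x Y c A =
        pair (I0 g B Y x) (Imat B Y) c (B *m realize g c A *m invmx B).
      move=> x Y Yl; apply: (pairI_eq hg Bu Bu' _ Yl).
      by rewrite conjB !mulmxA mulVmx // mul1mx -mulmxA mulVmx // mulmx1.
    by rewrite !H // e0 eM.
  split; first by have := key 1 0; rewrite !pair_one.
  apply/matrixP => p q; case: (ltnP q p) => qp; last by rewrite Xl ?Xl'.
  by have := key 0 (delta_mx q p); rewrite !pair_delta.
Qed.

Theorem lemma1 (R : realType) :
  lemma1_stmt (F := R) expR /\ lemma1_stmt (F := R[i]) (@cexp R).
Proof. by split; apply: lem1_main. Qed.
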